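(* Let $m=|V|\ge2$, $v,w\in V$ with $v\ne w$, and $\beta=\frac1m\sum_{u\in V}e_u$ the barycenter of $S$. Define $$\ell_{vw}(x)=\max\{0,n_{vw}^Tx-c\}-\ell_v^{1/2}(x)-\ell_w^{1/2}(x),\qquad n_{vw}=4(e_{vw}-\beta),\quad c=1-\frac4m.$$ Then $\ell_{vw}$ is affine on each corner $S_u$, $u\in V$; $\ell_{vw}(e_{vw})=1$; $\ell_{vw}$ vanishes at every vertex of $S_v$ and of $S_w$ other than $e_{vw}$; and $\ell_{vw}(x)=0$ for all $x\in S_u$ with $u\notin\{v,w\}$.
   Context: $V$ is a finite index set, $e_u$ ($u\in V$) the standard orthonormal basis of $\mathbb{R}^V$, $S=\operatorname{conv}\{e_u:u\in V\}$. For $u\ne w$, $e^\mu_{uw}=(1-\mu)e_u+\mu e_w$, $S_u^\mu=\operatorname{conv}(\{e_u\}\cup\{e_{uw}^\mu:w\ne u\})$, and abbreviations $e_{uw}=e^{1/2}_{uw}=\frac12(e_u+e_w)$, $S_u=S_u^{1/2}$. For $u\in V$, $\ell_u^{1/2}(x)=\max\{0,(n_u)^Tx-d\}$ with $n_u=\frac{2}{m}\sum_{w\ne u}(e_u-e_w)$ and $d=\frac{m/2-1}{m/2}$ (the function $\ell_u^\mu$ with $\ell_u^\mu(x)=\max\{0,(n_u^\mu)^Tx-d_\mu\}$, $n_u^\mu=\frac1{\mu m}\sum_{w\ne u}(e_u-e_w)$, $d_\mu=\frac{(1-\mu)m-1}{\mu m}$, at $\mu=1/2$). *)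

(* Defs.v *)
(* Points of R^V are functions T -> R, T : finType is V. *)
From mathcomp Require Import all_boot all_order all_algebra.
Set Implicit Arguments. Unset Strict Implicit. Unset Printing Implicit Defensive.
Import Order.TTheory GRing.Theory Num.Theory.
Local Open Scope ring_scope.

Section Defs.
Variables (R : realFieldType) (T : finType).

Definition msz : R := #|T|%:R.

Definition evec (u : T) : T -> R := fun t => (t == u)%:R.

Definition emu (mu : R) (u w : T) : T -> R :=
  fun t => (1 - mu) * evec u t + mu * evec w t.

Definition ehalf (u w : T) : T -> R := emu (2^-1) u w.

Definition dot (a x : T -> R) : R := \sum_(t : T) a t * x t.

Definition in_conv (I : finType) (p : I -> T -> R) (x : T -> R) : Prop :=
  exists lam : I -> R,
    [/\ forall i, 0 <= lam i, \sum_(i : I) lam i = 1 &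
        forall t, x t = \sum_(i : I) lam i * p i t].

(* generators of S_u^mu : e_u and e^mu_{uw} for w <> u (indexed by w : T,
   with index u giving e_u) *)
Definition corner_pts (mu : R) (u : T) : T -> T -> R :=
  fun w => if w == u then evec u else emu mu u w.

Definition in_corner (mu : R) (u : T) (x : T -> R) : Prop :=
  in_conv (corner_pts mu u) x.

Definition in_simplex (x : T -> R) : Prop := in_conv evec x.

Definition nmu (mu : R) (u : T) : T -> R :=
  fun t => (mu * msz)^-1 * \sum_(w : T | w != u) (evec u t - evec w t).

Definition dmu (mu : R) : R := ((1 - mu) * msz - 1) / (mu * msz).

Definition ellmu (mu : R) (u : T) (x : T -> R) : R :=
  Num.max 0 (dot (nmu mu u) x - dmu mu).

Definition bary : T -> R := fun t => msz^-1 * \sum_(u : T) evec u t.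

Definition nvw (v w : T) : T -> R := fun t => 4 * (ehalf v w t - bary t).

Definition cconst : R := 1 - 4 / msz.

Definition ellvw (v w : T) (x : T -> R) : R :=
  Num.max 0 (dot (nvw v w) x - cconst) - ellmu (2^-1) v x - ellmu (2^-1) w x.

Definition affine_on (P : (T -> R) -> Prop) (f : (T -> R) -> R) : Prop :=
  exists (a : T -> R) (b : R), forall x, P x -> f x = dot a x + b.

End Defs.

(* Main.v *)
Require Import Defs.
From mathcomp Require Import all_boot all_order all_algebra.
From mathcomp Require Import ring lra.
Import Order.TTheory GRing.Theory Num.Theory.
Set Implicit Arguments. Unset Strict Implicit.
Local Open Scope ring_scope.

Section H.
Variables (R : realFieldType) (T : finType).
Implicit Types (x : T -> R).

Lemma sum_evec (u : T) : \sum_t @evec R T u t = 1.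
Proof.
rewrite (bigD1 u) //= big1 ?addr0; first by rewrite /evec eqxx.
by move=> t /negbTE Ht; rewrite /evec Ht.
Qed.

Lemma sum_evec_w (t : T) : \sum_w @evec R T w t = 1.
Proof.
rewrite (bigD1 t) //= big1 ?addr0; first by rewrite /evec eqxx.
by move=> u Hu; rewrite /evec eq_sym (negbTE Hu).
Qed.

Lemma dot_evec (u : T) x : dot (@evec R T u) x = x u.
Proof.
rewrite /dot (bigD1 u) //= big1 ?addr0; first by rewrite /evec eqxx mul1r.
by move=> t /negbTE Ht; rewrite /evec Ht mul0r.
Qed.

Lemma dot_lin (k c : R) (a : T -> R) x :
  dot (fun t => k * a t + c) x = k * dot a x + c * \sum_t x t.
Proof.
rewrite /dot mulr_sumr mulr_sumr -big_split /=.
by apply: eq_bigr => t _; ring.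
Qed.

Lemma dot_lin2 (k1 k2 : R) (a b : T -> R) x :
  dot (fun t => k1 * a t + k2 * b t) x = k1 * dot a x + k2 * dot b x.
Proof.
rewrite /dot mulr_sumr mulr_sumr -big_split /=.
by apply: eq_bigr => t _; ring.
Qed.

Lemma msz_neq0 : (1 < #|T|)%N -> @msz R T != 0.
Proof. by move=> H; rewrite /msz pnatr_eq0 -lt0n; apply: ltnW. Qed.

Lemma nmu_dot (u : T) x : (1 < #|T|)%N -> \sum_t x t = 1 ->
  dot (nmu (2^-1) u) x - @dmu R T (2^-1) = 2 * x u - 1.
Proof.
move=> Hm Hs.
have Hm0 := msz_neq0 Hm.
have -> : dot (nmu (2^-1) u) x =
   dot (fun t => ((2^-1 * @msz R T)^-1 * @msz R T) * @evec R T u t + (- (2^-1 * @msz R T)^-1)) x.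
  apply: eq_bigr => t _; congr (_ * _); rewrite /nmu.
  have -> : \sum_(w | w != u) (@evec R T u t - @evec R T w t) = @msz R T * @evec R T u t - 1.
    rewrite -[LHS]add0r -{1}(subrr (@evec R T u t)).
    rewrite (eq_bigl (fun w => true && (w != u))) //.
    rewrite -(bigD1 u (F:=fun w=>@evec R T u t - @evec R T w t)) //=.
    by rewrite sumrB sumr_const sum_evec_w /msz mulr_natl.
  ring.
rewrite dot_lin Hs dot_evec /dmu.
field; rewrite Hm0 //.
Qed.

Lemma nvw_dot (v w : T) x : (1 < #|T|)%N -> \sum_t x t = 1 ->
  dot (@nvw R T v w) x - @cconst R T = 2 * (x v + x w) - 1.
Proof.
move=> Hm Hs; have Hm0 := msz_neq0 Hm.
have -> : dot (@nvw R T v w) x = dot (fun t => 2 * (@evec R T v t + @evec R T w t) + (- 4 / @msz R T)) x.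
  apply: eq_bigr => t _; congr (_ * _); rewrite /nvw /ehalf /emu /bary sum_evec_w.
  have -> : (1 - 2^-1 : R) = 2^-1 by field.
  by field; exact: Hm0.
rewrite (dot_lin 2 (-4 / @msz R T) (fun t => @evec R T v t + @evec R T w t)) Hs.
have -> : dot (fun t => @evec R T v t + @evec R T w t) x = x v + x w.
  have := dot_lin2 1 1 (@evec R T v) (@evec R T w) x; rewrite !mul1r !dot_evec => <-.
  by apply: eq_bigr => t _; rewrite !mul1r.
rewrite /cconst; field; rewrite Hm0 //.
Qed.

Definition mx0 (a : R) := Num.max 0 a.

Lemma ellvw_eq (v w : T) x : (1 < #|T|)%N -> \sum_t x t = 1 ->
  @ellvw R T v w x = Num.max 0 (2 * (x v + x w) - 1) - Num.max 0 (2 * x v - 1) - Num.max 0 (2 * x w - 1).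
Proof.
move=> Hm Hs; by rewrite /ellvw /ellmu !nmu_dot // nvw_dot.
Qed.

Lemma mxl (a : R) : a <= 0 -> Num.max 0 a = 0.
Proof. by move=> H; rewrite max_l. Qed.
Lemma mxr (a : R) : 0 <= a -> Num.max 0 a = a.
Proof. by move=> H; rewrite max_r. Qed.

Lemma evec_ge0 (u t : T) : 0 <= @evec R T u t.
Proof. by rewrite /evec; case: (t == u); rewrite ?ler01 ?lexx. Qed.

Lemma cpE (mu : R) (u w t : T) : corner_pts mu u w t = if w == u then @evec R T u t else emu mu u w t.
Proof. by rewrite /corner_pts; case: (w == u). Qed.
Lemma emuE (mu : R) (u w t : T) : emu mu u w t = (1 - mu) * @evec R T u t + mu * @evec R T w t.
Proof. by []. Qed.
Lemma evecE (u t : T) : @evec R T u t = (t == u)%:R.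
Proof. by []. Qed.

Lemma corner_facts (u : T) x : in_corner (2^-1) u x ->
  [/\ \sum_t x t = 1, forall t, 0 <= x t & 2^-1 <= x u].
Proof.
case=> lam [H0 H1 Hx].
have P0 : forall (j : T) (s : T), 0 <= corner_pts (2^-1 : R) u j s.
  move=> j s; rewrite cpE; case: (j == u); first exact: evec_ge0.
  rewrite emuE; have := @evec_ge0 u s; have := @evec_ge0 j s; lra.
have PS : forall j : T, \sum_t corner_pts (2^-1 : R) u j t = 1.
  move=> j; under eq_bigr do rewrite cpE; case: (j == u); first exact: sum_evec.
  under eq_bigr do rewrite emuE.
  rewrite big_split /= -!mulr_sumr !sum_evec; lra.
split.
- under eq_bigr do rewrite Hx.
  rewrite exchange_big /=; rewrite -[in RHS]H1; apply: eq_bigr => i _.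
  by rewrite -mulr_sumr PS mulr1.
- move=> t; rewrite Hx; apply: sumr_ge0 => i _; exact: mulr_ge0.
- have -> : (2^-1 : R) = \sum_i lam i * 2^-1 by rewrite -mulr_suml H1 mul1r.
  rewrite Hx; apply: ler_sum => i _; apply: ler_wpM2l => //.
  rewrite cpE; case: (i == u); rewrite ?emuE evecE eqxx /=; first by lra.
  have := @evec_ge0 i u; lra.
Qed.

Lemma two_le (a b : T) x : a != b -> (forall t, 0 <= x t) -> x a + x b <= \sum_t x t.
Proof.
move=> Hab H0; rewrite (bigD1 a) //= (bigD1 b) 1?eq_sym //= addrA lerDl.
by apply: sumr_ge0 => i _.
Qed.

Lemma three_le (a b c : T) x : a != b -> a != c -> b != c -> (forall t, 0 <= x t) ->
  x a + x b + x c <= \sum_t x t.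
Proof.
move=> Hab Hac Hbc H0; rewrite (bigD1 a) //= (bigD1 b) 1?eq_sym //= (bigD1 c) /=; last first.
  by rewrite eq_sym Hac eq_sym Hbc.
rewrite !addrA lerDl; by apply: sumr_ge0 => i _.
Qed.

Lemma ehalfE (a b t : T) : @ehalf R T a b t = 2^-1 * (t == a)%:R + 2^-1 * (t == b)%:R.
Proof. by rewrite /ehalf emuE !evecE; congr (_ * _ + _); field. Qed.

Lemma sum_ehalf (a b : T) : \sum_t @ehalf R T a b t = 1.
Proof.
under eq_bigr do rewrite /ehalf emuE.
rewrite big_split /= -!mulr_sumr !sum_evec; lra.
Qed.

Lemma dot2 (a : T) x : dot (fun t => 2 * @evec R T a t) x = 2 * x a.
Proof.
have := dot_lin 2 0 (@evec R T a) x; rewrite mul0r addr0 dot_evec => <-.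
by apply: eq_bigr => t _; rewrite addr0.
Qed.

End H.


Unset Implicit Arguments.

Theorem lemmaA2 (R : realFieldType) (T : finType) (v w : T) :
  (1 < #|T|)%N -> v != w ->
  [/\ (forall u : T, affine_on (@in_corner R T (2^-1) u) (@ellvw R T v w)),
      @ellvw R T v w (@ehalf R T v w) = 1,
      (@ellvw R T v w (@evec R T v) = 0 /\ @ellvw R T v w (@evec R T w) = 0),
      (forall u : T, u != v -> u != w ->
         @ellvw R T v w (@ehalf R T v u) = 0 /\ @ellvw R T v w (@ehalf R T w u) = 0) &
      (forall u : T, u != v -> u != w ->
         forall x : T -> R, @in_corner R T (2^-1) u x -> @ellvw R T v w x = 0)].
Proof.
move=> Hm Hvw.
have Hwv : w != v by rewrite eq_sym.
have P5 : forall u : T, u != v -> u != w ->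
         forall x : T -> R, @in_corner R T (2^-1) u x -> @ellvw R T v w x = 0.
  move=> u Huv Huw x /corner_facts [Hs H0 Hu].
  rewrite ellvw_eq //.
  have := three_le Huv Huw Hvw H0; rewrite Hs => H3.
  have := H0 v; have := H0 w => Hw Hv.
  rewrite !mxl; lra.
split => //.
- move=> u; case: (eqVneq u v) => [->|Huv].
    exists (fun t => 2 * @evec R T w t), 0 => x /corner_facts [Hs H0 Hu].
    rewrite dot2 addr0 ellvw_eq //.
    have := two_le Hvw H0; rewrite Hs => H2.
    have := H0 v; have := H0 w => Hw Hv.
    rewrite (mxr (a:=2 * (x v + x w) - 1)) ?(mxr (a:=2 * x v - 1)) ?(mxl (a:=2 * x w - 1)); lra.
  case: (eqVneq u w) => [->|Huw].
    exists (fun t => 2 * @evec R T v t), 0 => x /corner_facts [Hs H0 Hu].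
    rewrite dot2 addr0 ellvw_eq //.
    have := two_le Hvw H0; rewrite Hs => H2.
    have := H0 v; have := H0 w => Hw Hv.
    rewrite (mxr (a:=2 * (x v + x w) - 1)) ?(mxl (a:=2 * x v - 1)) ?(mxr (a:=2 * x w - 1)); lra.
  exists (fun _ => 0), 0 => x Hx.
  rewrite (P5 u) // addr0 /dot big1 // => t _; exact: mul0r.
- rewrite ellvw_eq ?sum_ehalf // !ehalfE !eqxx (negbTE Hvw) (negbTE Hwv) /=.
  rewrite mxr ?mxl; lra.
- rewrite !ellvw_eq ?sum_evec // !evecE !eqxx (negbTE Hvw) (negbTE Hwv) /=.
  rewrite !mulr0 !mulr1 !addr0 !add0r !mulr1; split; rewrite (mxr (a:=2-1)) ?(mxl (a:=-1)); lra.
- move=> u Huv Huw.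
  have Hvu : v != u by rewrite eq_sym.
  have Hwu : w != u by rewrite eq_sym.
  rewrite !ellvw_eq ?sum_ehalf // !ehalfE !eqxx (negbTE Hvw) (negbTE Hwv) (negbTE Hvu) (negbTE Hwu) /=.
  split; rewrite !mxl; lra.
Qed.
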